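(* Let $\mathbb F=\mathbb R$ or $\mathbb C$, $G$ an algebraic group over $\mathbb F$, $\rho:G\to\mathrm{GL}(V)$ a rational representation on an $n$-dimensional space with $\rho(G)\subseteq\mathrm{SL}(V)$, and $0<k<n$. Let $P=\{T\in V\otimes\mathbb F^k:\mathrm{Stab}_{G\times\mathrm{SL}_k}(T)\text{ is not compact}\}$ and $P'=\{S\in V^*\otimes\mathbb F^{n-k}:\mathrm{Stab}_{G\times\mathrm{SL}_{n-k}}(S)\text{ is not compact}\}$. Then $P$ contains a non-empty Euclidean (resp. Zariski) open subset of $V\otimes\mathbb F^k$ if and only if $P'$ contains a non-empty Euclidean (resp. Zariski) open subset of $V^*\otimes\mathbb F^{n-k}$.
   Context: $G\times\mathrm{SL}_k$ acts on $V\otimes\mathbb F^k$ by $(g,A)(v\otimes w)=\rho(g)v\otimes Aw$; $G\times\mathrm{SL}_{n-k}$ acts on $V^*\otimes\mathbb F^{n-k}$ analogously via the dual representation. Stabilizers are closed subgroups and carry their Lie group topology. *)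

(* Defs.v *)
From HB Require Import structures.
From mathcomp Require Import all_boot all_order all_algebra.
From mathcomp Require Import all_classical all_reals all_analysis.
From mathcomp Require Import complex.
From mathcomp Require mpoly.
Import Order.TTheory GRing.Theory Num.Theory.
Import numFieldNormedType.Exports.

Set Implicit Arguments.
Unset Strict Implicit.
Unset Printing Implicit Defensive.

Local Open Scope ring_scope.
Local Open Scope classical_set_scope.

(* The ground field F is either R or C = R[i] (R : realType); it is kept
   generic as a numFieldType and carries its Euclidean (norm) topology;
   matrix spaces 'M[F]_(m,n) carry the product (Euclidean) topology. *)

Definition mxcoords (F : numFieldType) m n (A : 'M[F]_(m, n)) : 'I_(m * n) -> F :=
  fun i => mxvec A 0 i.

Definition mxeval (F : numFieldType) m n (p : mpoly.mpoly (m * n) F)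
    (A : 'M[F]_(m, n)) : F :=
  mpoly.meval (mxcoords A) p.

Definition zariski_open (F : numFieldType) m n (U : set 'M[F]_(m, n)) : Prop :=
  exists S : set (mpoly.mpoly (m * n) F),
    U = ~` [set A | forall p, S p -> mxeval p A = 0].

Definition euclid_open (F : numFieldType) m n (U : set 'M[F]_(m, n)) : Prop :=
  open U.

(* (The F-points of) a linear algebraic group: a subgroup of GL_N(F) which is
   Zariski closed in GL_N(F), i.e. cut out in GL_N(F) by polynomial
   equations in the matrix entries. *)
Definition linear_algebraic_group (F : numFieldType) N (G : set 'M[F]_N) : Prop :=
  [/\ exists S : set (mpoly.mpoly (N * N) F),
        G = [set g | g \in unitmx /\ forall p, S p -> mxeval p g = 0],
      G 1%:M,
      (forall g h, G g -> G h -> G (g *m h)) &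
      (forall g, G g -> G (invmx g))].

(* A rational representation rho : G -> GL_n(F): a group homomorphism whose
   matrix coefficients are regular functions on G, i.e. of the form
   p_ij(g) / det(g)^e with polynomials p_ij in the entries of g. *)
Definition rational_rep (F : numFieldType) N n (G : set 'M[F]_N)
    (rho : 'M[F]_N -> 'M[F]_n) : Prop :=
  [/\ exists (P : 'I_n -> 'I_n -> mpoly.mpoly (N * N) F) (e : nat),
        forall g, G g -> rho g = \matrix_(i, j) (mxeval (P i j) g / (\det g) ^+ e),
      (forall g, G g -> rho g \in unitmx) &
      (forall g h, G g -> G h -> rho (g *m h) = rho g *m rho h)].

(* An element T of V (x) F^k is encoded as an n x k matrix (T = sum v_i (x) w_i
   corresponds to sum v_i w_i^T); the action of (g, A) in G x SL_k is
   T |-> rho(g) T A^T. *)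
Definition stab_tensor (F : numFieldType) N n k (G : set 'M[F]_N)
    (rho : 'M[F]_N -> 'M[F]_n) (T : 'M[F]_(n, k)) : set ('M[F]_N * 'M[F]_k) :=
  [set gA | [/\ G gA.1, \det gA.2 = 1 & rho gA.1 *m T *m gA.2^T = T]].

(* An element S of V^* (x) F^m is encoded as an n x m matrix (coordinates in
   the dual basis); the dual representation is g |-> rho(g)^{-T}, so the action
   of (g, B) in G x SL_m is S |-> rho(g)^{-T} S B^T. *)
Definition stab_dual_tensor (F : numFieldType) N n m (G : set 'M[F]_N)
    (rho : 'M[F]_N -> 'M[F]_n) (S : 'M[F]_(n, m)) : set ('M[F]_N * 'M[F]_m) :=
  [set gB | [/\ G gB.1, \det gB.2 = 1 & (invmx (rho gB.1))^T *m S *m gB.2^T = S]].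

Definition noncompact_locus (F : numFieldType) N n k (G : set 'M[F]_N)
    (rho : 'M[F]_N -> 'M[F]_n) : set 'M[F]_(n, k) :=
  [set T | ~ compact (stab_tensor G rho T)].

Definition noncompact_dual_locus (F : numFieldType) N n m (G : set 'M[F]_N)
    (rho : 'M[F]_N -> 'M[F]_n) : set 'M[F]_(n, m) :=
  [set S | ~ compact (stab_dual_tensor G rho S)].

Definition contains_nonempty_open (X : Type) (isopen : set X -> Prop) (P : set X) : Prop :=
  exists U : set X, [/\ isopen U, U !=set0 & U `<=` P].

Definition corollary3p8_over (F : numFieldType) : Prop :=
  forall (N n k : nat) (G : set 'M[F]_N) (rho : 'M[F]_N -> 'M[F]_n),
    linear_algebraic_group G ->
    rational_rep G rho ->
    (forall g, G g -> \det (rho g) = 1) ->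
    (0 < k < n)%N ->
    (contains_nonempty_open (@euclid_open F n k) (@noncompact_locus F N n k G rho)
       <-> contains_nonempty_open (@euclid_open F n (n - k))
             (@noncompact_dual_locus F N n (n - k) G rho))
    /\
    (contains_nonempty_open (@zariski_open F n k) (@noncompact_locus F N n k G rho)
       <-> contains_nonempty_open (@zariski_open F n (n - k))
             (@noncompact_dual_locus F N n (n - k) G rho)).

(* Main.v *)
Require Import Defs.
From HB Require Import structures.
From mathcomp Require Import all_boot all_order all_algebra.
From mathcomp Require Import all_classical all_reals all_analysis.
From mathcomp Require Import complex.
From mathcomp Require mpoly.
Import Order.TTheory GRing.Theory Num.Theory.
Import numFieldNormedType.Exports.
Set Implicit Arguments.
Unset Strict Implicit.
Unset Printing Implicit Defensive.
Local Open Scope ring_scope.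
Local Open Scope classical_set_scope.

Section Cont.
Variable (F : numFieldType) (X : topologicalType).

Lemma cst_cont (c : F) (x : X) : {for x, continuous (fun _ : X => c)}.
Proof. exact: cvg_cst. Qed.

Lemma add_cont (f g : X -> F) x : {for x, continuous f} -> {for x, continuous g} ->
  {for x, continuous (fun y => f y + g y)}.
Proof. by move=> cf cg; apply: cvgD. Qed.

Lemma mul_cont (f g : X -> F) x : {for x, continuous f} -> {for x, continuous g} ->
  {for x, continuous (fun y => f y * g y)}.
Proof. by move=> cf cg; apply: cvgM. Qed.

Lemma inv_cont (f : X -> F) x : f x != 0 -> {for x, continuous f} ->
  {for x, continuous (fun y => (f y)^-1)}.
Proof. by move=> f0 cf; apply: cvgV. Qed.

Lemma sum_cont (I : Type) (r : seq I) (P : pred I) (g : I -> X -> F) x :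
  (forall i, {for x, continuous (g i)}) ->
  {for x, continuous (fun y => \sum_(i <- r | P i) g i y)}.
Proof.
move=> cg; elim: r => [|a r IH].
  have -> : (fun y => \sum_(i <- [::] | P i) g i y) = (fun _ => 0).
    by apply: funext => y; rewrite big_nil.
  exact: cst_cont.
have -> : (fun y => \sum_(i <- a :: r | P i) g i y) =
   (fun y => (if P a then g a y else 0) + \sum_(i <- r | P i) g i y).
  by apply: funext => y; rewrite big_cons; case: (P a); rewrite ?add0r.
apply: add_cont => //; case: (P a) => //; exact: cst_cont.
Qed.

Lemma prod_cont (I : Type) (r : seq I) (P : pred I) (g : I -> X -> F) x :
  (forall i, {for x, continuous (g i)}) ->
  {for x, continuous (fun y => \prod_(i <- r | P i) g i y)}.
Proof.
move=> cg; elim: r => [|a r IH].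
  have -> : (fun y => \prod_(i <- [::] | P i) g i y) = (fun _ => 1).
    by apply: funext => y; rewrite big_nil.
  exact: cst_cont.
have -> : (fun y => \prod_(i <- a :: r | P i) g i y) =
   (fun y => (if P a then g a y else 1) * \prod_(i <- r | P i) g i y).
  by apply: funext => y; rewrite big_cons; case: (P a); rewrite ?mul1r.
apply: mul_cont => //; case: (P a) => //; exact: cst_cont.
Qed.

Lemma exp_cont (f : X -> F) x e : {for x, continuous f} ->
  {for x, continuous (fun y => f y ^+ e)}.
Proof.
move=> cf; elim: e => [|e IH].
  have -> : (fun y => f y ^+ 0) = (fun _ => 1) by apply: funext => y; rewrite expr0.
  exact: cst_cont.
have -> : (fun y => f y ^+ e.+1) = (fun y => f y * f y ^+ e).
  by apply: funext => y; rewrite exprS.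
exact: mul_cont.
Qed.

Lemma entry_cont m n (f : X -> 'M[F]_(m, n)) x i j : {for x, continuous f} ->
  {for x, continuous (fun y => f y i j)}.
Proof.
move=> cf.
exact: (cvg_comp f (fun M : 'M[F]_(m, n) => M i j) cf (@coord_continuous F m n i j (f x))).
Qed.

Lemma mx_cont m n (f : X -> 'M[F]_(m, n)) x :
  (forall i j, {for x, continuous (fun y => f y i j)}) -> {for x, continuous f}.
Proof.
move=> H A [P Pnb sPA].
have : \forall y \near x, forall ij : 'I_m * 'I_n, P ij.1 ij.2 (f y ij.1 ij.2).
  apply: filter_forall => -[i j] /=; exact: (H i j _ (Pnb i j)).
by apply: filterS => y Hy; apply: sPA => i j; exact: (Hy (i, j)).
Qed.

Lemma det_cont n (f : X -> 'M[F]_n) x : {for x, continuous f} ->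
  {for x, continuous (fun y => \det (f y))}.
Proof.
move=> cf; rewrite /determinant; apply: sum_cont => s.
apply: mul_cont; first exact: cst_cont.
apply: prod_cont => i; exact: entry_cont.
Qed.

Lemma mulmx_cont m n p (f : X -> 'M[F]_(m, n)) (g : X -> 'M[F]_(n, p)) x :
  {for x, continuous f} -> {for x, continuous g} ->
  {for x, continuous (fun y => f y *m g y)}.
Proof.
move=> cf cg; apply: mx_cont => i j.
have -> : (fun y => (f y *m g y) i j) = (fun y => \sum_k f y i k * g y k j).
  by apply: funext => y; rewrite mxE.
apply: sum_cont => l; apply: mul_cont; exact: entry_cont.
Qed.

Lemma adj_cont n (f : X -> 'M[F]_n) x : {for x, continuous f} ->
  {for x, continuous (fun y => \adj (f y))}.
Proof.
move=> cf; apply: mx_cont => i j.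
have -> : (fun y => \adj (f y) i j) =
  (fun y => (-1) ^+ (j + i) * \det (row' j (col' i (f y)))).
  by apply: funext => y; rewrite mxE.
apply: mul_cont; first exact: cst_cont.
apply: det_cont; apply: mx_cont => a b.
have -> : (fun y => row' j (col' i (f y)) a b) = (fun y => f y (lift j a) (lift i b)).
  by apply: funext => y; rewrite !mxE.
exact: entry_cont.
Qed.

Lemma trmx_cont m n (f : X -> 'M[F]_(m, n)) x : {for x, continuous f} ->
  {for x, continuous (fun y => (f y)^T)}.
Proof.
move=> cf; apply: mx_cont => i j.
have -> : (fun y => (f y)^T i j) = (fun y => f y j i) by apply: funext => y; rewrite mxE.
exact: entry_cont.
Qed.

Lemma id_cont (x : X) : {for x, continuous (fun y => y)}.
Proof. exact: cvg_id. Qed.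

Lemma cst_mx_cont m n (c : 'M[F]_(m, n)) (x : X) : {for x, continuous (fun _ : X => c)}.
Proof. exact: cvg_cst. Qed.

End Cont.

Lemma mxeval_cont (F : numFieldType) m n (p : mpoly.mpoly (m * n) F) :
  continuous (fun A : 'M[F]_(m, n) => mxeval p A).
Proof.
move=> A; rewrite /mxeval.
rewrite /mpoly.meval /mpoly.mmap.
apply: sum_cont => mm; apply: mul_cont; first exact: cst_cont.
rewrite /mpoly.mmap1; apply: prod_cont => i; apply: exp_cont.
rewrite /mxcoords; case/mxvec_indexP: i => i j.
have -> : (fun B : 'M[F]_(m, n) => mxvec B 0 (mxvec_index i j)) = (fun B => B i j).
  by apply: funext => B; rewrite mxvecE.
exact: coord_continuous.
Qed.


Lemma pair_cont (X U V : topologicalType) (f : X -> U) (g : X -> V) x :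
  {for x, continuous f} -> {for x, continuous g} ->
  {for x, continuous (fun y => (f y, g y))}.
Proof. by move=> cf cg; apply: cvg_pair. Qed.


Section Key.
Variables (F : numFieldType) (N k m : nat) (G : set 'M[F]_N)
  (sig : 'M[F]_N -> 'M[F]_(k + m)) (M : 'M[F]_(k + m)).
Hypothesis uM : M \in unitmx.
Hypothesis hsig : forall g, G g -> sig g \in unitmx /\ \det (sig g) = 1.
Hypothesis csig : forall g, G g -> {for g, continuous sig}.

Let E1 : 'M[F]_(k + m, k) := col_mx 1%:M 0.
Let E2 : 'M[F]_(k + m, m) := col_mx 0 1%:M.
Let T := M *m E1.
Let S := (invmx M)^T *m E2.
Let Q g := invmx M *m sig g *m M.

Lemma det1_unit n (A : 'M[F]_n) : \det A = 1 -> A \in unitmx.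
Proof. by move=> h; rewrite unitmxE h unitr1. Qed.

Lemma detQ g : G g -> \det (Q g) = 1.
Proof.
move=> Gg; have [_ d1] := hsig Gg.
rewrite /Q !det_mulmx det_inv d1 mulr1 mulVr //; by rewrite -unitmxE.
Qed.

Lemma stabT_iff g A : G g -> (stab_tensor G sig T (g, A) <->
  [/\ \det A = 1, dlsubmx (Q g) = 0 & ulsubmx (Q g) *m A^T = 1%:M]).
Proof.
move=> Gg; rewrite /stab_tensor /=.
have key : invmx M *m (sig g *m T *m A^T) = col_mx (ulsubmx (Q g) *m A^T) (dlsubmx (Q g) *m A^T).
  rewrite /T !mulmxA -/(Q g) -{1}(submxK (Q g)) mul_block_col !mulmx1 !mulmx0 !addr0.
  by rewrite mul_col_mx.
have keyT : invmx M *m T = col_mx 1%:M 0 by rewrite /T mulKmx.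
split.
  case=> _ dA e.
  have /eq_col_mx [h1 h2] : col_mx (ulsubmx (Q g) *m A^T) (dlsubmx (Q g) *m A^T) = col_mx 1%:M 0.
    by rewrite -key -keyT e.
  split => //.
  have uA : A^T \in unitmx by rewrite unitmx_tr det1_unit.
  by rewrite -(mulmxK uA (dlsubmx (Q g))) h2 mul0mx.
case=> dA dl0 ul1; split => //.
have inj : injective (@mulmx F (k + m) (k + m) k (invmx M)).
  by apply: can_inj (mulKVmx uM).
by apply: inj; rewrite key keyT dl0 mul0mx ul1.
Qed.

Lemma stabS_iff g B : G g -> (stab_dual_tensor G sig S (g, B) <->
  [/\ \det B = 1, dlsubmx (Q g) = 0 & B = drsubmx (Q g)]).
Proof.
move=> Gg; rewrite /stab_dual_tensor /=.
have [us _] := hsig Gg.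
have uSM : sig g *m M \in unitmx by rewrite unitmx_mul us uM.
have E2T : E2^T = row_mx 0 1%:M by rewrite /E2 tr_col_mx trmx0 trmx1.
have eqv : ((invmx (sig g))^T *m S *m B^T = S) <-> (B *m E2^T = E2^T *m Q g).
  have L : ((invmx (sig g))^T *m S *m B^T)^T *m (sig g *m M) = B *m E2^T.
    rewrite /S !trmx_mul !trmxK !mulmxA.
    rewrite -(mulmxA _ (invmx (sig g))) mulVmx // mulmx1.
    by rewrite -(mulmxA _ (invmx M)) mulVmx // mulmx1.
  have R : S^T *m (sig g *m M) = E2^T *m Q g.
    by rewrite /S /Q trmx_mul trmxK !mulmxA.
  split=> [e|e].
    by rewrite -L -R e.
  apply: trmx_inj; apply: (can_inj (mulmxK uSM)); by rewrite L R.
have blk : (B *m E2^T = E2^T *m Q g) <-> (dlsubmx (Q g) = 0 /\ B = drsubmx (Q g)).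
  rewrite E2T mul_mx_row mulmx0 mulmx1 -{1}(submxK (Q g)) mul_row_block.
  rewrite !mul0mx !mul1mx !add0r.
  split; first by move/eq_row_mx => [h1 h2].
  by case=> h1 h2; rewrite h1 h2.
split.
  by case=> _ dB /eqv /blk [h1 h2].
case=> dB h1 h2; split => //; apply/eqv/blk; by split.
Qed.

Lemma Qcont (p : 'M[F]_N * 'M[F]_k) : G p.1 ->
  {for p, continuous (fun q : 'M[F]_N * 'M[F]_k => Q q.1)}.
Proof.
move=> Gp.
have cf : {for p, continuous (fun q : 'M[F]_N * 'M[F]_k => q.1)} by apply: cvg_fst.
have cs : {for p, continuous (fun q : 'M[F]_N * 'M[F]_k => sig q.1)}.
  exact: (cvg_comp _ _ cf (csig Gp)).
rewrite /Q; apply: mulmx_cont; last exact: cst_mx_cont.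
apply: mulmx_cont => //; exact: cst_mx_cont.
Qed.

Lemma detaQ g : G g -> dlsubmx (Q g) = 0 ->
  \det (ulsubmx (Q g)) * \det (drsubmx (Q g)) = 1.
Proof.
move=> Gg h; rewrite -(detQ Gg) -{3}(submxK (Q g)) h det_ublock //.
Qed.

Lemma adj_ok n (a : 'M[F]_n) : \det a = 1 ->
  a *m (\adj a)^T^T = 1%:M /\ \det (\adj a)^T = 1.
Proof.
move=> da; rewrite trmxK mul_mx_adj da; split => //.
rewrite det_tr; have := det_mulmx a (\adj a).
by rewrite mul_mx_adj da det1 mul1r.
Qed.

Let f (p : 'M[F]_N * 'M[F]_k) : 'M[F]_N * 'M[F]_m := (p.1, drsubmx (Q p.1)).
Let h (p : 'M[F]_N * 'M[F]_m) : 'M[F]_N * 'M[F]_k := (p.1, (\adj (ulsubmx (Q p.1)))^T).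

Lemma imf : f @` stab_tensor G sig T = stab_dual_tensor G sig S.
Proof.
apply/seteqP; split.
  move=> _ [[g A] ST <-]; have Gg : G g by case: ST.
  have /(stabT_iff _ Gg) [dA dl0 ul1] := ST.
  apply/(stabS_iff _ Gg); split => //.
  have := detaQ Gg dl0; have := det_mulmx (ulsubmx (Q g)) A^T.
  by rewrite ul1 det1 det_tr dA mulr1 => <-; rewrite mul1r.
move=> [g B] SS; have Gg : G g by case: SS.
have /(stabS_iff _ Gg) [dB dl0 eB] := SS.
have da : \det (ulsubmx (Q g)) = 1.
  by have := detaQ Gg dl0; rewrite -eB dB mulr1.
have [h1 h2] := adj_ok da.
exists (g, (\adj (ulsubmx (Q g)))^T); last by rewrite /f /= eB.
by apply/(stabT_iff _ Gg).
Qed.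

Lemma imh : h @` stab_dual_tensor G sig S = stab_tensor G sig T.
Proof.
apply/seteqP; split.
  move=> _ [[g B] SS <-]; have Gg : G g by case: SS.
  have /(stabS_iff _ Gg) [dB dl0 eB] := SS.
  have da : \det (ulsubmx (Q g)) = 1.
    by have := detaQ Gg dl0; rewrite -eB dB mulr1.
  have [h1 h2] := adj_ok da.
  by apply/(stabT_iff _ Gg).
move=> [g A] ST; have Gg : G g by case: ST.
have /(stabT_iff _ Gg) [dA dl0 ul1] := ST.
have dd : \det (drsubmx (Q g)) = 1.
  have := detaQ Gg dl0; have := det_mulmx (ulsubmx (Q g)) A^T.
  by rewrite ul1 det1 det_tr dA mulr1 => <-; rewrite mul1r.
exists (g, drsubmx (Q g)); first by apply/(stabS_iff _ Gg).
rewrite /h /=; congr pair.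
have da : \det (ulsubmx (Q g)) = 1 by have := detaQ Gg dl0; rewrite dd mulr1.
have [h1 _] := adj_ok da.
have [ua _] := mulmx1_unit ul1.
apply: trmx_inj; rewrite trmxK.
by rewrite trmxK in h1; rewrite -[LHS](mulKmx ua) h1 -[RHS](mulKmx ua) ul1.
Qed.

Lemma key_compact : compact (stab_tensor G sig T) <-> compact (stab_dual_tensor G sig S).
Proof.
split=> C.
  rewrite -imf; apply: continuous_compact C; apply: continuous_in_subspaceT.
  move=> [g A] /set_mem ST; have Gg : G g by case: ST.
  apply: pair_cont; first by apply: cvg_fst.
  apply: mx_cont => i j.
  have E : (fun q : 'M[F]_N * 'M[F]_k => drsubmx (Q q.1) i j) =
     (fun q => Q q.1 (rshift k i) (rshift k j)).
    apply: funext => q.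
    by rewrite !mxE.
  rewrite E.
  exact: entry_cont (Qcont _).
rewrite -imh; apply: continuous_compact C; apply: continuous_in_subspaceT.
move=> [g B] /set_mem SS; have Gg : G g by case: SS.
apply: pair_cont; first by apply: cvg_fst.
apply: trmx_cont; apply: adj_cont; apply: mx_cont => i j.
have -> : (fun q : 'M[F]_N * 'M[F]_m => ulsubmx (Q q.1) i j) =
   (fun q => Q q.1 (lshift m i) (lshift m j)).
  by apply: funext => q; rewrite !mxE.
have cf : {for (g, B), continuous (fun q : 'M[F]_N * 'M[F]_m => q.1)} by apply: cvg_fst.
have cs : {for (g, B), continuous (fun q : 'M[F]_N * 'M[F]_m => sig q.1)}.
  exact: (cvg_comp _ _ cf (csig Gg)).
apply: entry_cont; rewrite /Q; apply: mulmx_cont; last exact: cst_mx_cont.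
apply: mulmx_cont => //; exact: cst_mx_cont.
Qed.

End Key.


Canonical mpoly.mpoly_comp_mpoly__canonical__Algebra_Additive.
Canonical mpoly.mpoly_comp_mpoly__canonical__GRing_LRMorphism.
Canonical mpoly.mpoly_comp_mpoly__canonical__GRing_Linear.
Canonical mpoly.mpoly_comp_mpoly__canonical__GRing_RMorphism.
Canonical mpoly.mpoly_meval__canonical__Algebra_Additive.
Canonical mpoly.mpoly_meval__canonical__GRing_LRMorphism.
Canonical mpoly.mpoly_meval__canonical__GRing_Linear.
Canonical mpoly.mpoly_meval__canonical__GRing_RMorphism.
Canonical mpoly.mpoly_mmap__canonical__Algebra_Additive.
Canonical mpoly.mpoly_mmap__canonical__GRing_RMorphism.
Canonical mpoly.mpoly_mpolyC__canonical__Algebra_Additive.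
Canonical mpoly.mpoly_mpolyC__canonical__GRing_RMorphism.
Canonical mpoly.mpoly_mpoly__canonical__Algebra_AddMagma.
Canonical mpoly.mpoly_mpoly__canonical__Algebra_AddSemigroup.
Canonical mpoly.mpoly_mpoly__canonical__Algebra_AddUMagma.
Canonical mpoly.mpoly_mpoly__canonical__Algebra_BaseAddMagma.
Canonical mpoly.mpoly_mpoly__canonical__Algebra_BaseAddUMagma.
Canonical mpoly.mpoly_mpoly__canonical__Algebra_BaseZmodule.
Canonical mpoly.mpoly_mpoly__canonical__Algebra_ChoiceBaseAddMagma.
Canonical mpoly.mpoly_mpoly__canonical__Algebra_ChoiceBaseAddUMagma.
Canonical mpoly.mpoly_mpoly__canonical__Algebra_Nmodule.
Canonical mpoly.mpoly_mpoly__canonical__Algebra_Zmodule.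
Canonical mpoly.mpoly_mpoly__canonical__GRing_Algebra.
Canonical mpoly.mpoly_mpoly__canonical__GRing_ComAlgebra.
Canonical mpoly.mpoly_mpoly__canonical__GRing_ComNzRing.
Canonical mpoly.mpoly_mpoly__canonical__GRing_ComNzSemiRing.
Canonical mpoly.mpoly_mpoly__canonical__GRing_ComPzRing.
Canonical mpoly.mpoly_mpoly__canonical__GRing_ComPzSemiRing.
Canonical mpoly.mpoly_mpoly__canonical__GRing_ComSemiAlgebra.
Canonical mpoly.mpoly_mpoly__canonical__GRing_ComUnitAlgebra.
Canonical mpoly.mpoly_mpoly__canonical__GRing_ComUnitRing.
Canonical mpoly.mpoly_mpoly__canonical__GRing_IntegralDomain.
Canonical mpoly.mpoly_mpoly__canonical__GRing_LSemiAlgebra.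
Canonical mpoly.mpoly_mpoly__canonical__GRing_LSemiModule.
Canonical mpoly.mpoly_mpoly__canonical__GRing_Lalgebra.
Canonical mpoly.mpoly_mpoly__canonical__GRing_Lmodule.
Canonical mpoly.mpoly_mpoly__canonical__GRing_NzRing.
Canonical mpoly.mpoly_mpoly__canonical__GRing_NzSemiRing.
Canonical mpoly.mpoly_mpoly__canonical__GRing_PzRing.
Canonical mpoly.mpoly_mpoly__canonical__GRing_PzSemiRing.
Canonical mpoly.mpoly_mpoly__canonical__GRing_SemiAlgebra.
Canonical mpoly.mpoly_mpoly__canonical__GRing_UnitAlgebra.
Canonical mpoly.mpoly_mpoly__canonical__GRing_UnitRing.
Canonical mpoly.mpoly_mpoly__canonical__choice_Choice.
Canonical mpoly.mpoly_mpoly__canonical__choice_SubChoice.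
Canonical mpoly.mpoly_mpoly__canonical__eqtype_Equality.
Canonical mpoly.mpoly_mpoly__canonical__eqtype_SubEquality.
Canonical mpoly.mpoly_mpoly__canonical__eqtype_SubType.

Definition paired (F : numFieldType) k m (T : 'M[F]_(k + m, k)) (S : 'M[F]_(k + m, m)) :=
  exists M : 'M[F]_(k + m), [/\ M \in unitmx, T = M *m col_mx 1%:M 0 &
     S = (invmx M)^T *m col_mx 0 1%:M].

Lemma paired_of (F : numFieldType) k m (a : 'M[F]_k) (c : 'M[F]_(m, k))
   (b : 'M[F]_(k, m)) (d : 'M[F]_m) :
  a \in unitmx -> d \in unitmx -> (col_mx a c)^T *m col_mx b d = 0 ->
  paired (col_mx a c) (col_mx b d).
Proof.
move=> ua ud orth.
pose M := row_mx (col_mx a c) (col_mx 0 (invmx d)^T).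
have uM : M \in unitmx.
  rewrite /M -block_mxEh unitmxE det_lblock unitrM -!unitmxE ua /=.
  by rewrite unitmx_tr unitmx_inv.
exists M; split => //.
  by rewrite /M mul_row_col mulmx1 mulmx0 addr0.
have MS : M^T *m col_mx b d = col_mx 0 1%:M.
  rewrite /M tr_row_mx mul_col_mx orth tr_col_mx trmx0 trmxK mul_row_col mul0mx add0r.
  by rewrite mulVmx.
have uMT : M^T \in unitmx by rewrite unitmx_tr.
by rewrite trmx_inv -MS mulKmx.
Qed.

Section PolyMap.
Variable F : numFieldType.

Definition Xv a b : 'M[mpoly.mpoly (a * b) F]_(a, b) :=
  \matrix_(i, j) @mpoly.mpolyX _ F (mpoly.mnm1 (mxvec_index i j)).

Lemma Xv_eval a b (x : 'M[F]_(a, b)) :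
  map_mx (mpoly.meval (mxcoords x)) (Xv a b) = x.
Proof.
apply/matrixP => i j; rewrite !mxE mpoly.mevalXU /mxcoords mxvecE //.
Qed.

Definition polymap a b p q (Pm : 'M[mpoly.mpoly (a * b) F]_(p, q)) (x : 'M[F]_(a, b)) :=
  map_mx (mpoly.meval (mxcoords x)) Pm.

Lemma polymap_cont a b p q (Pm : 'M[mpoly.mpoly (a * b) F]_(p, q)) :
  continuous (polymap Pm).
Proof.
move=> x; apply: mx_cont => i j.
have -> : (fun y => polymap Pm y i j) = (fun y => mxeval (Pm i j) y).
  by apply: funext => y; rewrite mxE.
exact: mxeval_cont.
Qed.

Lemma nbhs_neq0 (X : topologicalType) (f : X -> F) x : f x != 0 ->
  {for x, continuous f} -> \forall y \near x, f y != 0.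
Proof.
move=> fx cf; suff : nbhs (f x) [set y : F | y != 0] by move/cf.
apply/nbhs_ballP; exists `|f x|; first by rewrite /= normr_gt0.
move=> y; rewrite -ball_normE /= => h; apply/eqP => y0.
by rewrite y0 subr0 ltxx in h.
Qed.

Lemma polymap_open a b p q (Pm : 'M[mpoly.mpoly (a * b) F]_(p, q)) dp U :
  open U -> open [set x | mxeval dp x != 0 /\ U (polymap Pm x)].
Proof.
move=> oU; rewrite openE => x [dx Ux].
have n1 : \forall y \near x, mxeval dp y != 0.
  exact: (@nbhs_neq0 _ (fun y : 'M[F]_(a, b) => mxeval dp y) x dx (@mxeval_cont _ _ _ dp x)).
have n2 : \forall y \near x, U (polymap Pm y).
  have cP : {for x, continuous (polymap Pm)} by apply: polymap_cont.
  apply: cP; apply: open_nbhs_nbhs; by split.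
by apply: filterS (filterI n1 n2) => y [].
Qed.

Lemma polymap_zariski a b p q (Pm : 'M[mpoly.mpoly (a * b) F]_(p, q)) dp U :
  zariski_open U -> zariski_open [set x | mxeval dp x != 0 /\ U (polymap Pm x)].
Proof.
move=> [Sg ->].
pose lq := [tuple mxvec Pm 0 i | i < p * q].
exists [set r | exists2 s, Sg s & r = mpoly.comp_mpoly lq s * dp].
have ev s x : mxeval (mpoly.comp_mpoly lq s * dp) x = mxeval s (polymap Pm x) * mxeval dp x.
  rewrite /mxeval mpoly.mevalM mpoly.comp_mpoly_meval; congr (_ * _).
  apply: mpoly.meval_eq => i; rewrite tnth_mktuple /mxcoords /polymap.
  by rewrite -map_mxvec mxE.
apply/seteqP; split => x /=.
  case=> dx nU H; apply: nU => s Ss; apply/eqP.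
  have := H _ (ex_intro2 _ _ s Ss erefl); rewrite ev => /eqP.
  by rewrite mulf_eq0 (negbTE dx) orbF.
move=> nH; have dx : mxeval dp x != 0.
  apply/negP => /eqP d0; apply: nH => r [s Ss ->]; by rewrite ev d0 mulr0.
split => // H; apply: nH => r [s Ss ->]; by rewrite ev H // mul0r.
Qed.

End PolyMap.

Lemma char_poly_horner (R : comNzRingType) n (A : 'M[R]_n) t :
  (char_poly A).[t] = \det (t%:M - A).
Proof.
rewrite /char_poly -horner_evalE -det_map_mx; congr (\det _).
apply/matrixP => i j; rewrite !mxE /= horner_evalE.
by case: (i == j); rewrite /= ?mulr1n ?mulr0n !hornerE.
Qed.

Lemma perturb (F : numFieldType) p q r (U : set 'M[F]_(p, q)) x1 (E : 'M[F]_(p, q))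
   (g : 'M[F]_(p, q) -> 'M[F]_r) :
  open U -> U x1 -> (forall t, g (x1 + t *: E) = g x1 + t%:M) ->
  exists x0, U x0 /\ g x0 \in unitmx.
Proof.
move=> oU Ux1 gE.
have c : {for 0, continuous (fun t : F => x1 + t *: E)}.
  apply: mx_cont => i j.
  have -> : (fun t : F => (x1 + t *: E) i j) = (fun t => x1 i j + t * E i j).
    by apply: funext => t; rewrite !mxE.
  apply: add_cont; first exact: cst_cont.
  apply: mul_cont; [exact: id_cont | exact: cst_cont].
have nb : \forall t \near (0 : F), U (x1 + t *: E).
  apply: c; rewrite scale0r addr0; apply: open_nbhs_nbhs; by split.
have [e /= e0 he] := (nbhs_ballP _ _).1 nb.
pose qq := char_poly (- g x1).
have qq0 : qq != 0 by apply: monic_neq0; exact: char_poly_monic.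
pose s := [seq e / (j.+2)%:R | j <- iota 0 (size qq)].
have us : uniq s.
  rewrite map_inj_uniq ?iota_uniq // => a b /(mulfI (lt0r_neq0 e0)) /invr_inj /eqP.
  by rewrite eqr_nat => /eqP [].
have : ~~ all (root qq) s.
  apply/negP => al; have := max_poly_roots qq0 al us.
  by rewrite size_map size_iota ltnn.
case/allPn => t /mapP [j _ ->] nr.
have j2 : 0 < (j.+2)%:R :> F by rewrite ltr0n.
exists (x1 + e / (j.+2)%:R *: E); split.
  apply: he; rewrite -ball_normE /= sub0r normrN ger0_norm; last first.
    by rewrite divr_ge0 // ltW.
  rewrite ltr_pdivrMr // -{1}(mulr1 e) ltr_pM2l // ltr1n //.
rewrite gE unitmxE unitfE; move: nr; rewrite /root char_poly_horner.
by rewrite opprK addrC.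
Qed.


Definition phi1 (R : comNzRingType) k m (a0 : 'M[R]_k) (S : 'M[R]_(k + m, m)) : 'M[R]_(k + m, k) :=
  col_mx (\det (dsubmx S) *: a0) (- (usubmx S *m \adj (dsubmx S))^T *m a0).

Definition phi2 (R : comNzRingType) k m (d0 : 'M[R]_m) (T : 'M[R]_(k + m, k)) : 'M[R]_(k + m, m) :=
  col_mx (- (dsubmx T *m \adj (usubmx T))^T *m d0) (\det (usubmx T) *: d0).

Lemma map_phi1 (R R' : comNzRingType) (f : {rmorphism R -> R'}) k m a0 (S : 'M[R]_(k + m, m)) :
  map_mx f (phi1 a0 S) = phi1 (map_mx f a0) (map_mx f S).
Proof.
rewrite /phi1 map_col_mx map_mxZ -(det_map_mx f) map_dsubmx map_mxM map_mxN -map_trmx.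
by rewrite map_mxM map_mx_adj map_usubmx map_dsubmx.
Qed.

Lemma map_phi2 (R R' : comNzRingType) (f : {rmorphism R -> R'}) k m d0 (T : 'M[R]_(k + m, k)) :
  map_mx f (phi2 d0 T) = phi2 (map_mx f d0) (map_mx f T).
Proof.
rewrite /phi2 map_col_mx map_mxZ -(det_map_mx f) map_usubmx map_mxM map_mxN -map_trmx.
by rewrite map_mxM map_mx_adj map_usubmx map_dsubmx.
Qed.

Section Open.
Variable F : numFieldType.

Lemma mapC_eval a b (x : 'M[F]_(a, b)) p q (c : 'M[F]_(p, q)) :
  map_mx (mpoly.meval (mxcoords x)) (map_mx (@mpoly.mpolyC (a * b) F) c) = c.
Proof. by apply/matrixP => i j; rewrite !mxE mpoly.mevalC. Qed.

Lemma detX_eval a b r (x : 'M[F]_(a, b)) (h : 'M[F]_(a, b) -> 'M[F]_r)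
   (hp : 'M[mpoly.mpoly (a * b) F]_(a, b) -> 'M[mpoly.mpoly (a * b) F]_r) :
  map_mx (mpoly.meval (mxcoords x)) (hp (Xv F a b)) = h x ->
  mxeval (\det (hp (Xv F a b))) x = \det (h x).
Proof. by move=> e; rewrite /mxeval -(det_map_mx (mpoly.meval (mxcoords x))) e. Qed.

Variable op : forall a b, set 'M[F]_(a, b) -> Prop.
Hypothesis opH1 : forall a b p q (Pm : 'M[mpoly.mpoly (a * b) F]_(p, q)) dp U,
  op U -> op [set x | mxeval dp x != 0 /\ U (polymap Pm x)].
Hypothesis opH2 : forall a b (U : set 'M[F]_(a, b)), op U -> open U.

Lemma O1 k m (U : set 'M[F]_(k + m, k)) : op U -> U !=set0 ->
  exists U' : set 'M[F]_(k + m, m),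
    [/\ op U', U' !=set0 & forall S, U' S -> exists T, U T /\ paired T S].
Proof.
move=> oU [T1 UT1].
have gE : forall t, usubmx (T1 + t *: col_mx 1%:M 0) = usubmx T1 + t%:M.
  by move=> t; rewrite -{1}(vsubmxK T1) scale_col_mx add_col_mx col_mxKu scalemx1.
have [T0 [UT0 uT0]] := perturb (opH2 oU) UT1 gE.
set a0 := usubmx T0; set c0 := dsubmx T0.
pose Pm := phi1 (map_mx (@mpoly.mpolyC ((k + m) * m) F) a0) (Xv F (k + m) m).
pose dp := \det (dsubmx (Xv F (k + m) m)).
have PmE x : polymap Pm x = phi1 a0 x.
  by rewrite /polymap /Pm map_phi1 mapC_eval Xv_eval.
have dpE x : mxeval dp x = \det (dsubmx x).
  apply: (detX_eval (hp := dsubmx)); by rewrite map_dsubmx Xv_eval.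
exists [set x | mxeval dp x != 0 /\ U (polymap Pm x)]; split.
- exact: opH1.
- exists (col_mx (- (c0 *m invmx a0)^T) 1%:M) => /=.
  rewrite PmE dpE col_mxKd det1 oner_neq0; split => //.
  rewrite /phi1 col_mxKd col_mxKu det1 scale1r adj1 mulmx1 linearN /= trmxK opprK.
  by rewrite mulmxKV // /a0 /c0 vsubmxK.
move=> S /= [dS US]; rewrite PmE in US; rewrite dpE in dS.
exists (phi1 a0 S); split => //.
have ud : dsubmx S \in unitmx by rewrite unitmxE unitfE.
rewrite -[X in paired _ X](vsubmxK S); apply: paired_of => //.
  rewrite unitmxE detZ unitrM -(unitmxE a0) uT0 andbT; apply: unitrX; by rewrite unitfE.
rewrite tr_col_mx mul_row_col linearZ /= -scalemxAl trmx_mul linearN /= trmxK.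
rewrite mulmxN mulNmx -!mulmxA mul_adj_mx mul_mx_scalar -scalemxAr.

by rewrite addrN.
Qed.

Lemma O2 k m (U : set 'M[F]_(k + m, m)) : op U -> U !=set0 ->
  exists U' : set 'M[F]_(k + m, k),
    [/\ op U', U' !=set0 & forall T, U' T -> exists S, U S /\ paired T S].
Proof.
move=> oU [S1 US1].
have gE : forall t, dsubmx (S1 + t *: col_mx 0 1%:M) = dsubmx S1 + t%:M.
  by move=> t; rewrite -{1}(vsubmxK S1) scale_col_mx add_col_mx col_mxKd scalemx1.
have [S0 [US0 uS0]] := perturb (opH2 oU) US1 gE.
set b0 := usubmx S0; set d0 := dsubmx S0.
pose Pm := phi2 (map_mx (@mpoly.mpolyC ((k + m) * k) F) d0) (Xv F (k + m) k).
pose dp := \det (usubmx (Xv F (k + m) k)).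
have PmE x : polymap Pm x = phi2 d0 x.
  by rewrite /polymap /Pm map_phi2 mapC_eval Xv_eval.
have dpE x : mxeval dp x = \det (usubmx x).
  apply: (detX_eval (hp := usubmx)); by rewrite map_usubmx Xv_eval.
exists [set x | mxeval dp x != 0 /\ U (polymap Pm x)]; split.
- exact: opH1.
- exists (col_mx 1%:M (- (b0 *m invmx d0)^T)) => /=.
  rewrite PmE dpE col_mxKu det1 oner_neq0; split => //.
  rewrite /phi2 col_mxKd col_mxKu det1 scale1r adj1 mulmx1 linearN /= trmxK opprK.
  by rewrite mulmxKV // /b0 /d0 vsubmxK.
move=> T /= [dT UT]; rewrite PmE in UT; rewrite dpE in dT.
exists (phi2 d0 T); split => //.
have ua : usubmx T \in unitmx by rewrite unitmxE unitfE.
rewrite -[X in paired X _](vsubmxK T); apply: paired_of => //.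
  rewrite unitmxE detZ unitrM -(unitmxE d0) uS0 andbT; apply: unitrX; by rewrite unitfE.
rewrite tr_col_mx mul_row_col trmx_mul mulNmx mulmxN !mulmxA -trmx_mul mul_adj_mx tr_scalar_mx.
rewrite mul_scalar_mx -scalemxAr -scalemxAl.
by rewrite addNr.
Qed.

End Open.


Lemma main_km (F : numFieldType) N k m (G : set 'M[F]_N) (sig : 'M[F]_N -> 'M[F]_(k + m))
  (hsig : forall g, G g -> sig g \in unitmx /\ \det (sig g) = 1)
  (csig : forall g, G g -> {for g, continuous sig})
  (op : forall a b, set 'M[F]_(a, b) -> Prop)
  (opH1 : forall a b p q (Pm : 'M[mpoly.mpoly (a * b) F]_(p, q)) dp U,
     op p q U -> op a b [set x | mxeval dp x != 0 /\ U (polymap Pm x)])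
  (opH2 : forall a b (U : set 'M[F]_(a, b)), op a b U -> open U) :
  contains_nonempty_open (op (k + m) k) (noncompact_locus G sig) <->
  contains_nonempty_open (op (k + m) m) (noncompact_dual_locus G sig).
Proof.
split.
  case=> U [oU neU sub].
  have [U' [oU' neU' hU']] := O1 opH1 opH2 oU neU.
  exists U'; split => // S U'S.
  have [T [UT [M [uM eT eS]]]] := hU' S U'S.
  have nc := sub T UT; move=> cS; apply: nc.
  rewrite eT; apply/(key_compact uM hsig csig); by rewrite -eS.
case=> U [oU neU sub].
have [U' [oU' neU' hU']] := O2 opH1 opH2 oU neU.
exists U'; split => // T U'T.
have [S [US [M [uM eT eS]]]] := hU' T U'T.
have nc := sub S US; move=> cT; apply: nc.
rewrite eS; apply/(key_compact uM hsig csig); by rewrite -eT.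
Qed.

Lemma zariski_is_open (F : numFieldType) a b (U : set 'M[F]_(a, b)) :
  zariski_open U -> open U.
Proof.
case=> Sg ->; rewrite openE => x /= nx.
have [p Sp px] : exists2 p, Sg p & mxeval p x != 0.
  apply: contra_notP nx => H p Sp; apply/eqP; apply: contra_notT H => px.
  by exists p.
have := @nbhs_neq0 F _ (fun y : 'M[F]_(a, b) => mxeval p y) x px (@mxeval_cont _ _ _ p x).
by apply: filterS => y py /= H; move: py; rewrite H ?eqxx.
Qed.

Lemma stab_ext (F : numFieldType) N n k (G : set 'M[F]_N) (s1 s2 : 'M[F]_N -> 'M[F]_n) :
  (forall g, G g -> s1 g = s2 g) ->
  noncompact_locus (k := k) G s1 = noncompact_locus G s2 /\
  noncompact_dual_locus (m := k) G s1 = noncompact_dual_locus G s2.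
Proof.
move=> e; split; apply: funext => T; rewrite /noncompact_locus /noncompact_dual_locus /=.
  have -> : stab_tensor G s1 T = stab_tensor G s2 T => //.
  by apply/seteqP; split => -[g A] [Gg dA h]; split => //; rewrite ?e // -?e.
have -> : stab_dual_tensor G s1 T = stab_dual_tensor G s2 T => //.
by apply/seteqP; split => -[g A] [Gg dA h]; split => //; rewrite ?e // -?e.
Qed.

Lemma main_over (F : numFieldType) : corollary3p8_over F.
Proof.
move=> N n k G rho HG Hrho Hdet hk.
case: HG => -[SG eG] _ _ _.
have Gu g : G g -> g \in unitmx by rewrite eG => -[].
case: Hrho => -[P [e Hf]] Hu _.
pose rt (g : 'M[F]_N) : 'M[F]_n := \matrix_(i, j) (mxeval (P i j) g / \det g ^+ e).
have [E1 E2] := @stab_ext F N n k G rho rt Hf.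
have [E3 E4] := @stab_ext F N n (n - k)%N G rho rt Hf.
rewrite E1 E4.
have hsig g : G g -> rt g \in unitmx /\ \det (rt g) = 1.
  by move=> Gg; rewrite /rt -Hf //; split; [apply: Hu | apply: Hdet].
have csig g : G g -> {for g, continuous rt}.
  move=> Gg; apply: mx_cont => i j.
  have -> : (fun y => rt y i j) = (fun y => mxeval (P i j) y * (\det y ^+ e)^-1).
    by apply: funext => y; rewrite mxE.
  apply: mul_cont; first exact: mxeval_cont.
  apply: inv_cont.
    by rewrite expf_neq0 // -unitfE -unitmxE Gu.
  apply: exp_cont; apply: det_cont; exact: id_cont.
have kn : (k <= n)%N by case/andP: hk => _ /ltnW.
clear E1 E2 E3 E4.
move: rt hsig csig; set m := (n - k)%N => rt hsig csig.
have en : n = (k + m)%N by rewrite /m subnKC.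
clearbody m; subst n.
split.
  exact: (main_km hsig csig (op := fun a b => @euclid_open F a b))
    (fun a b p q Pm dp U => @polymap_open F a b p q Pm dp U) (fun a b U h => h).
exact: (main_km hsig csig (op := fun a b => @zariski_open F a b))
  (fun a b p q Pm dp U => @polymap_zariski F a b p q Pm dp U)
  (fun a b U h => zariski_is_open h).
Qed.

Unset Implicit Arguments.
Close Scope ring_scope.
Close Scope classical_set_scope.

Theorem corollary3p8 (R : realType) :
  corollary3p8_over R /\ corollary3p8_over R[i].
Proof. split; exact: main_over. Qed.
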